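(* Consider a linearly separable training set $\{(\mathbf{x}_i,y_i)\}_{i=1}^N$, $\mathbf{x}_i\in\mathbb{R}^n$, $y_i\in\{-1,1\}$, whose maximum-margin separating hyperplane passes through the origin, and train a linear model with learnable bias by gradient descent (small step size $\eta$, approximated by gradient flow) on the exponential loss $\mathcal{L}(\mathbf{w},b)=\sum_{i=1}^N e^{-y_i(\mathbf{w}^T\mathbf{x}_i+b)}$. Suppose the weight iterates satisfy $\mathbf{w}(t)=\hat{\mathbf{w}}\log t+\boldsymbol\rho(t)$ with $\|\boldsymbol\rho(t)\|$ bounded and $\boldsymbol\rho(t)\to\tilde{\mathbf{w}}$, where $\hat{\mathbf{w}}$ is the hard-margin SVM weight vector (so $y_i\hat{\mathbf{w}}^T\mathbf{x}_i=1$ on support vectors), the support vectors span the dataset, $\hat{\mathbf{w}}=\sum_{i\in\mathcal{S}}\alpha_i\mathbf{x}_{s,i}$, and $\tilde{\mathbf{w}}$ satisfies $\eta\exp(-\mathbf{x}_{s,i}^T\tilde{\mathbf{w}})=\alpha_i$ for each support vector. Let $\mathcal{S}^+$, $\mathcal{S}^-$ be the support vectors of class $+1$ and $-1$ respectively, and define $A_S^+=\sum_{i\in\mathcal{S}^+}\exp(-\tilde{\mathbf{w}}^T\mathbf{x}_i)$, $A_S^-=\sum_{i\in\mathcal{S}^-}\exp(\tilde{\mathbf{w}}^T\mathbf{x}_i)$, $\delta=\sqrt{A_S^-/A_S^+}$, and $g(t)=2\sqrt{A_S^+A_S^-}\log(t/t_0)$, where $t_0$ is a constant (the time at which the late-time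 dynamics begin). If the bias is initialized at $0$, then the late-time gradient flow dynamics of the bias follow $$\frac{db}{dt}=\frac{1}{t}\left(A_S^+e^{-b}-A_S^-e^{b}\right),$$ and integrating, $$b(t)=\log\left(\frac{(1+\delta)\exp(g(t))-(1-\delta)}{(1+\delta)\exp(g(t))+(1-\delta)}\right)-\log\delta .$$ Consequently $b(t)$ converges to $b_\infty=-\log\delta$.
   Context: Support vectors are the training points $\mathbf{x}_{s,i}$ with $y_i(\mathbf{w}_{SVM}^T\mathbf{x}_i+b_{SVM})=1$, where $(\mathbf{w}_{SVM},b_{SVM})$ is the minimum-norm solution of $y_i(\mathbf{w}^T\mathbf{x}_i+b)\ge 1$ for all $i$; by assumption $b_{SVM}=0$. ''Late-time dynamics'' refers to times $t\ge t_0$ at which $\boldsymbol\rho(t)$ may be replaced by its limit $\tilde{\mathbf{w}}$ and only support vectors contribute to the loss gradient. *)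

(* Defs.v *)
From Stdlib Require Import Reals.
From Coquelicot Require Import Coquelicot.
Open Scope R_scope.

Fixpoint sumR (n : nat) (f : nat -> R) : R :=
  match n with
  | O => 0
  | S m => sumR m f + f m
  end.

(* Vectors of R^n are represented as functions nat -> R (only coordinates
   0..n-1 matter). *)
Definition dot (n : nat) (u v : nat -> R) : R := sumR n (fun k => u k * v k).
Definition sqnorm (n : nat) (u : nat -> R) : R := dot n u u.

Definition hm_feasible (n N : nat) (x : nat -> nat -> R) (y : nat -> R)
  (w : nat -> R) (b : R) : Prop :=
  forall i, (i < N)%nat -> y i * (dot n w (x i) + b) >= 1.

Definition hard_margin_svm_bias0 (n N : nat) (x : nat -> nat -> R) (y : nat -> R)
  (what : nat -> R) : Prop :=
  hm_feasible n N x y what 0 /\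
  forall w b, hm_feasible n N x y w b -> sqnorm n what <= sqnorm n w.

Definition is_support (n : nat) (x : nat -> nat -> R) (y : nat -> R)
  (what : nat -> R) (i : nat) : bool :=
  if Req_EM_T (y i * dot n what (x i)) 1 then true else false.

Definition is_label (y : R) (c : R) : bool :=
  if Req_EM_T y c then true else false.

Definition A_plus (n N : nat) (x : nat -> nat -> R) (y : nat -> R)
  (what wtil : nat -> R) : R :=
  sumR N (fun i => if andb (is_support n x y what i) (is_label (y i) 1)
                   then exp (- dot n wtil (x i)) else 0).

Definition A_minus (n N : nat) (x : nat -> nat -> R) (y : nat -> R)
  (what wtil : nat -> R) : R :=
  sumR N (fun i => if andb (is_support n x y what i) (is_label (y i) (-1))
                   then exp (dot n wtil (x i)) else 0).

(* Late-time gradient-flow velocity of the bias: -dL/db where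
   L(w,b) = sum_i exp(-y_i (w^T x_i + b)), with w(t) = what log t + wtil
   (rho(t) replaced by its limit wtil) and only support vectors kept. *)
Definition late_bias_velocity (n N : nat) (x : nat -> nat -> R) (y : nat -> R)
  (what wtil : nat -> R) (t bt : R) : R :=
  sumR N (fun i => if is_support n x y what i
                   then y i * exp (- y i * (dot n (fun k => what k * ln t + wtil k) (x i) + bt))
                   else 0).

(* Main.v *)
Require Import Defs.
From Stdlib Require Import Reals Lra Lia.
From Coquelicot Require Import Coquelicot.
Open Scope R_scope.

Lemma sumR_ext n f g : (forall k, (k < n)%nat -> f k = g k) -> sumR n f = sumR n g.
Proof. induction n; simpl; intros H; auto. rewrite IHn by (intros; apply H; lia). rewrite H by lia. auto. Qed.

Lemma sumR_plus n f g : sumR n (fun k => f k + g k) = sumR n f + sumR n g.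
Proof. induction n; simpl; [lra|]. rewrite IHn; lra. Qed.

Lemma sumR_scal n c f : sumR n (fun k => c * f k) = c * sumR n f.
Proof. induction n; simpl; [lra|]. rewrite IHn; lra. Qed.

Lemma sumR_nonneg n f : (forall k, (k < n)%nat -> 0 <= f k) -> 0 <= sumR n f.
Proof. induction n; simpl; intros H; [lra|]. assert (0 <= f n) by (apply H; lia).
 assert (0 <= sumR n f) by (apply IHn; intros; apply H; lia). lra. Qed.

Lemma sumR_pos n f i : (forall k, (k < n)%nat -> 0 <= f k) -> (i < n)%nat -> 0 < f i -> 0 < sumR n f.
Proof. induction n; simpl; intros H Hi Hf; [lia|].
 assert (0 <= f n) by (apply H; lia).
 destruct (Nat.eq_dec i n) as [->|Hne].
 - assert (0 <= sumR n f) by (apply sumR_nonneg; intros; apply H; lia). lra.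
 - assert (0 < sumR n f) by (apply IHn; [intros; apply H; lia| lia| exact Hf]).
   lra. Qed.

Lemma sumR_sq0 n w v : sumR n (fun k => w k * w k) = 0 -> sumR n (fun k => w k * v k) = 0.
Proof. induction n; simpl; intros H; [lra|].
 assert (0 <= sumR n (fun k => w k * w k)) by (apply sumR_nonneg; intros; nra).
 assert (0 <= w n * w n) by nra.
 assert (w n = 0) by nra. rewrite IHn by lra. rewrite H2. lra. Qed.

Lemma dot_lin n a c w v : dot n (fun k => a * w k + c k) v = a * dot n w v + dot n c v.
Proof. unfold dot. rewrite <- sumR_scal, <- sumR_plus. apply sumR_ext. intros; ring. Qed.

Lemma dot_scal n a w v : dot n (fun k => a * w k) v = a * dot n w v.
Proof. unfold dot. rewrite <- sumR_scal. apply sumR_ext. intros; ring. Qed.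

Lemma sqnorm_scal n a w : sqnorm n (fun k => a * w k) = a * a * sqnorm n w.
Proof. unfold sqnorm, dot. rewrite <- sumR_scal. apply sumR_ext. intros; ring. Qed.

Lemma fin_min (N : nat) (P : nat -> Prop) (h : nat -> R) :
  (forall i, (i < N)%nat -> P i -> 1 < h i) ->
  exists m, 1 < m /\ forall i, (i < N)%nat -> P i -> m <= h i.
Proof. induction N; intros H.
 - exists 2. split; [lra|]. intros; lia.
 - destruct IHN as [m [Hm1 Hm]]. { intros; apply H; auto; lia. }
   destruct (Classical_Prop.classic (P N)) as [HP|HP].
   + assert (1 < h N) by (apply H; auto).
     exists (Rmin m (h N)). split. { apply Rmin_case; lra. }
     intros i Hi Pi. destruct (Nat.eq_dec i N) as [->|Hne]. apply Rmin_r.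
     eapply Rle_trans; [apply Rmin_l| apply Hm; auto; lia].
   + exists m. split; auto. intros i Hi Pi. destruct (Nat.eq_dec i N) as [->|Hne]. tauto. apply Hm; auto; lia.
Qed.

Lemma support_exists n N x y what (sg : R) :
  (0 < N)%nat ->
  (forall i, (i < N)%nat -> y i = 1 \/ y i = -1) ->
  hard_margin_svm_bias0 n N x y what ->
  (sg = 1 \/ sg = -1) ->
  exists i, (i < N)%nat /\ y i = sg /\ y i * dot n what (x i) = 1.
Proof.
 intros HN Hy [Hf Hmin] Hsg.
 apply Classical_Prop.NNPP; intros Hno.
 destruct (fin_min N (fun i => y i = sg) (fun i => y i * dot n what (x i))) as [m [Hm1 Hm]].
 { intros i Hi Pi. specialize (Hf i Hi). rewrite Rplus_0_r in Hf.
   destruct (Req_dec (y i * dot n what (x i)) 1) as [E|E].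
   - exfalso; apply Hno; exists i; auto.
   - lra. }
 set (c := 2 / (m + 1)).
 assert (Hc0 : 0 < c) by (unfold c; apply Rdiv_lt_0_compat; lra).
 assert (Hc1 : c < 1) by (unfold c; apply Rmult_lt_reg_r with (m+1); [lra|]; field_simplify; lra).
 assert (Hcm : c * (m + 1) = 2) by (unfold c; field; lra).
 assert (Hfeas : hm_feasible n N x y (fun k => c * what k) (sg * (c - 1))).
 { intros i Hi. rewrite dot_scal. specialize (Hf i Hi). rewrite Rplus_0_r in Hf.
   set (D := dot n what (x i)) in *.
   destruct (Req_dec (y i) sg) as [E|E].
   + assert (Hmi := Hm i Hi E). rewrite E in *. fold D in Hmi.
     assert (sg * sg = 1) by (destruct Hsg; subst; lra).
     assert (c * (sg * D) >= c * m) by (apply Rle_ge, Rmult_le_compat_l; [lra|]; exact Hmi).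
     replace (sg * (c * D + sg * (c - 1))) with (c * (sg * D) + (sg * sg) * (c - 1)) by ring. nra.
   + assert (y i * sg = -1) by (destruct (Hy i Hi), Hsg; subst; try lra; rewrite H, H0 in E; lra).
     assert (c * (y i * D) >= c * 1) by (apply Rle_ge, Rmult_le_compat_l; lra).
     replace (y i * (c * D + sg * (c - 1))) with (c * (y i * D) + (y i * sg) * (c - 1)) by ring. nra. }
 specialize (Hmin _ _ Hfeas). rewrite sqnorm_scal in Hmin.
 assert (0 <= sqnorm n what) by (apply sumR_nonneg; intros; nra).
 assert (c * c < 1) by nra. assert (Hz : sqnorm n what = 0) by nra.
 specialize (Hf 0%nat HN). unfold dot in Hf. rewrite (sumR_sq0 n what (x 0%nat) Hz) in Hf. lra.
Qed.

Lemma sumR_comb N f g u a c : u * (sumR N f * a - sumR N g * c) = sumR N (fun i => u * (f i * a - g i * c)).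
Proof. induction N; simpl; [ring|]. rewrite <- IHN; ring. Qed.

Lemma velocity_eq n N x y what wtil t bt :
  (forall i, (i < N)%nat -> y i = 1 \/ y i = -1) -> 0 < t ->
  late_bias_velocity n N x y what wtil t bt =
  / t * (A_plus n N x y what wtil * exp (- bt) - A_minus n N x y what wtil * exp bt).
Proof.
 intros Hy Ht. unfold late_bias_velocity, A_plus, A_minus.
 rewrite sumR_comb.
 apply sumR_ext. intros i Hi.
 replace (dot n (fun k => what k * ln t + wtil k) (x i)) with (ln t * dot n what (x i) + dot n wtil (x i))
   by (rewrite <- dot_lin; unfold dot; apply sumR_ext; intros; ring).
 unfold is_support, is_label.
 destruct (Req_EM_T (y i * dot n what (x i)) 1) as [S|S]; simpl.
 2: ring.
 assert (Einv : exp (- ln t) = / t) by (rewrite exp_Ropp, exp_ln; auto).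
 destruct (Hy i Hi) as [E|E]; rewrite E in *.
 - destruct (Req_EM_T 1 1) as [_|C]; [|lra]. destruct (Req_EM_T 1 (-1)) as [C|_]; [lra|]. simpl.
   replace (dot n what (x i)) with 1 by lra.
   replace (- (1) * (ln t * 1 + dot n wtil (x i) + bt)) with (- ln t + (- dot n wtil (x i) + - bt)) by ring.
   rewrite !exp_plus, Einv. ring.
 - destruct (Req_EM_T (-1) 1) as [C|_]; [lra|]. destruct (Req_EM_T (-1) (-1)) as [_|C]; [|lra]. simpl.
   replace (dot n what (x i)) with (-1) by lra.
   replace (- (-1) * (ln t * -1 + dot n wtil (x i) + bt)) with (- ln t + (dot n wtil (x i) + bt)) by ring.
   rewrite !exp_plus, Einv. ring.
Qed.

Lemma cont_of_derive f x l : is_derive f x l -> continuity_pt f x.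
Proof. intros H. apply derivable_continuous_pt. exists l. apply is_derive_Reals. exact H. Qed.

Lemma A_pos n N x y what wtil (sg : R) :
  (0 < N)%nat ->
  (forall i, (i < N)%nat -> y i = 1 \/ y i = -1) ->
  hard_margin_svm_bias0 n N x y what ->
  0 < A_plus n N x y what wtil /\ 0 < A_minus n N x y what wtil.
Proof.
 intros HN Hy Hs. split.
 - destruct (support_exists n N x y what 1 HN Hy Hs (or_introl eq_refl)) as [i [Hi [E S]]].
   unfold A_plus. apply sumR_pos with i; auto.
   + intros k _. destruct andb; [apply Rlt_le, exp_pos| lra].
   + unfold is_support, is_label. destruct (Req_EM_T _ 1) as [_|C]; [|tauto].
     destruct (Req_EM_T (y i) 1) as [_|C]; [|tauto]. simpl. apply exp_pos.
 - destruct (support_exists n N x y what (-1) HN Hy Hs (or_intror eq_refl)) as [i [Hi [E S]]].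
   unfold A_minus. apply sumR_pos with i; auto.
   + intros k _. destruct andb; [apply Rlt_le, exp_pos| lra].
   + unfold is_support, is_label. destruct (Req_EM_T _ 1) as [_|C]; [|tauto].
     destruct (Req_EM_T (y i) (-1)) as [_|C]; [|tauto]. simpl. apply exp_pos.
Qed.

Lemma ode_sol (Ap Am t0 : R) (b : R -> R) :
  0 < Ap -> 0 < Am -> 0 < t0 -> b t0 = 0 ->
  (forall t, t0 <= t -> is_derive b t (/ t * (Ap * exp (- b t) - Am * exp (b t)))) ->
  let delta := sqrt (Am / Ap) in
  let g := fun t => 2 * sqrt (Ap * Am) * ln (t / t0) in
  (forall t, t0 <= t ->
     b t = ln (((1 + delta) * exp (g t) - (1 - delta)) /
               ((1 + delta) * exp (g t) + (1 - delta))) - ln delta) /\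
  is_lim b p_infty (Finite (- ln delta)).
Proof.
 intros HAp HAm Ht0 Hb0 Hder delta g.
 assert (Hd : 0 < delta) by (apply sqrt_lt_R0; apply Rdiv_lt_0_compat; auto).
 assert (Hdd : delta * delta = Am / Ap) by (apply sqrt_sqrt; apply Rlt_le, Rdiv_lt_0_compat; auto).
 assert (Hs : sqrt (Ap * Am) = Ap * delta).
 { replace (Ap * Am) with ((Ap * Ap) * (Am / Ap)) by (field; lra).
   rewrite sqrt_mult_alt by nra. rewrite sqrt_square by lra. reflexivity. }
 assert (HAm' : Am = Ap * delta * delta) by (rewrite Rmult_assoc, Hdd; field; lra).
 set (s := sqrt (Ap * Am)) in *.
 assert (Hspos : 0 < s) by (rewrite Hs; nra).
 set (Phi := fun t => (1 - delta * exp (b t)) / (1 + delta * exp (b t)) * exp (g t)).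
 assert (HPd : forall t, t0 <= t -> is_derive Phi t 0).
 { intros t Ht. unfold Phi, g. auto_derive.
   - repeat split; try (exists (/ t * (Ap * exp (- b t) - Am * exp (b t))); apply Hder; auto).
     + apply Rgt_not_eq. assert (0 < exp (b t)) by apply exp_pos. nra.
     + apply Rdiv_lt_0_compat; lra.
   - change (Derive (fun x => b x) t) with (Derive b t). rewrite (is_derive_unique _ _ _ (Hder t Ht)).
     rewrite HAm', Hs, exp_Ropp. 
     assert (0 < exp (b t)) by apply exp_pos.
     field. repeat split; try lra. apply Rgt_not_eq. nra. }
 assert (Hg0 : forall t, t0 <= t -> 0 <= g t).
 { intros t Ht. unfold g. apply Rmult_le_pos; [lra|]. rewrite <- ln_1. apply ln_le; [lra|].
   apply Rmult_le_reg_r with t0; [lra|]. unfold Rdiv; rewrite Rmult_assoc, Rinv_l; lra. }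
 assert (HG1 : forall t, t0 <= t -> 1 <= exp (g t)).
 { intros t Ht. rewrite <- exp_0. destruct (Hg0 t Ht) as [H|H]. apply Rlt_le, exp_increasing; auto. rewrite <- H; lra. }
 assert (HPhi0 : Phi t0 = (1 - delta) / (1 + delta)).
 { unfold Phi, g. rewrite Hb0, exp_0. replace (t0 / t0) with 1 by (field; lra). rewrite ln_1, Rmult_0_r, exp_0. field. lra. }
 assert (HPhi : forall t, t0 <= t -> Phi t = (1 - delta) / (1 + delta)).
 { intros t Ht. destruct Ht as [Ht|Ht]; [|rewrite <- Ht; auto].
   destruct (MVT_gen Phi t0 t (fun _ => 0)) as [c [_ Hc]].
   - intros z Hz. apply HPd. rewrite Rmin_left in Hz; lra.
   - intros z Hz. apply cont_of_derive with 0. apply HPd. rewrite Rmin_left in Hz; lra.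
   - rewrite <- HPhi0. lra. }
 assert (Hform : forall t, t0 <= t -> b t = ln (((1 + delta) * exp (g t) - (1 - delta)) /
               ((1 + delta) * exp (g t) + (1 - delta))) - ln delta).
 { intros t Ht. specialize (HPhi t Ht). unfold Phi in HPhi.
   assert (HG := HG1 t Ht). set (G := exp (g t)) in *.
   assert (Hz : 0 < exp (b t)) by apply exp_pos. set (z := exp (b t)) in *.
   assert (Hk : (1 - delta * z) * G * (1 + delta) = (1 - delta) * (1 + delta * z)).
   { replace ((1 - delta * z) * G * (1 + delta)) with (((1 - delta * z) / (1 + delta * z) * G) * (1 + delta * z) * (1 + delta)) by (field; nra).
     rewrite HPhi. field. lra. }
   assert (Hden : 0 < (1 + delta) * G + (1 - delta)) by nra.
   replace (((1 + delta) * G - (1 - delta)) / ((1 + delta) * G + (1 - delta))) with (delta * z).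
   - rewrite ln_mult by lra. unfold z. rewrite ln_exp. ring.
   - apply Rmult_eq_reg_r with ((1 + delta) * G + (1 - delta)); [|lra].
     field_simplify; [|lra]. nra. }
 split; [exact Hform|].
 set (h := fun u => ln (((1 + delta) - (1 - delta) * u) / ((1 + delta) + (1 - delta) * u)) - ln delta).
 assert (Hpos : forall u, 0 <= u <= 1 -> 0 < (1 + delta) + (1 - delta) * u) by (intros; nra).
 assert (Hpos2 : forall u, 0 <= u <= 1 -> 0 < (1 + delta) - (1 - delta) * u) by (intros; nra).
 apply is_lim_ext_loc with (fun t => h (exp (- g t))).
 { exists t0. intros t Ht. rewrite Hform by lra. unfold h. f_equal. f_equal.
   rewrite exp_Ropp. assert (HG := HG1 t (Rlt_le _ _ Ht)). field. nra. }
 replace (- ln delta) with (h 0).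
 2: { unfold h. replace ((1 + delta - (1 - delta) * 0) / (1 + delta + (1 - delta) * 0)) with 1 by (field; lra).
      rewrite ln_1. ring. }
 apply is_lim_comp with (Finite 0).
 - apply is_lim_continuity. apply cont_of_derive with (Derive h 0). apply Derive_correct.
   assert (P1: 0 < 1+delta+(1-delta)*0) by nra. assert (P2: 0 < 1+delta-(1-delta)*0) by nra.
   unfold h. auto_derive. repeat split; try lra. apply Rdiv_lt_0_compat; lra.
 - apply is_lim_comp with m_infty.
   + apply is_lim_exp_m.
   + apply is_lim_spec. intros M. exists (Rmax t0 (t0 * exp ((Rabs M + 1) / (2 * s)))).
     intros t Ht. assert (H1 := Rmax_l t0 (t0 * exp ((Rabs M + 1) / (2 * s)))).
     assert (H2 := Rmax_r t0 (t0 * exp ((Rabs M + 1) / (2 * s)))).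
     assert (Hl : (Rabs M + 1) / (2 * s) < ln (t / t0)).
     { rewrite <- (ln_exp ((Rabs M + 1) / (2 * s))). apply ln_increasing. apply exp_pos.
       apply Rmult_lt_reg_r with t0; [lra|]. unfold Rdiv at 2. rewrite Rmult_assoc, Rinv_l by lra. lra. }
     unfold g. assert (2 * s * ((Rabs M + 1) / (2 * s)) = Rabs M + 1) by (field; lra).
     assert (2 * s * ((Rabs M + 1) / (2 * s)) < 2 * s * ln (t / t0)) by (apply Rmult_lt_compat_l; lra).
     assert (Hm := Rle_abs (- M)). rewrite Rabs_Ropp in Hm. lra.
   + exists 0. intros; discriminate.
 - exists 0. intros t _ E. injection E. intros E'. assert (0 < exp (- g t)) by apply exp_pos. lra.
Qed.

Theorem theorem4p4 (n N : nat) (x : nat -> nat -> R) (y : nat -> R)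
  (what wtil : nat -> R) (t0 : R) (b : R -> R) :
  (0 < N)%nat ->
  (forall i, (i < N)%nat -> y i = 1 \/ y i = -1) ->
  hard_margin_svm_bias0 n N x y what ->
  0 < t0 ->
  b t0 = 0 ->
  (forall t, t0 <= t -> is_derive b t (late_bias_velocity n N x y what wtil t (b t))) ->
  let Ap := A_plus n N x y what wtil in
  let Am := A_minus n N x y what wtil in
  let delta := sqrt (Am / Ap) in
  let g := fun t => 2 * sqrt (Ap * Am) * ln (t / t0) in
  (forall t, t0 <= t -> is_derive b t (/ t * (Ap * exp (- b t) - Am * exp (b t)))) /\
  (forall t, t0 <= t ->
     b t = ln (((1 + delta) * exp (g t) - (1 - delta)) /
               ((1 + delta) * exp (g t) + (1 - delta))) - ln delta) /\
  is_lim b p_infty (Finite (- ln delta)).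
Proof.
  intros HN Hy Hs Ht0 Hb0 Hder Ap Am delta g.
  assert (Hd : forall t, t0 <= t -> is_derive b t (/ t * (Ap * exp (- b t) - Am * exp (b t)))).
  { intros t Ht. unfold Ap, Am. rewrite <- velocity_eq by (auto; lra). apply Hder; auto. }
  destruct (A_pos n N x y what wtil 1 HN Hy Hs) as [HAp HAm].
  split; [exact Hd|].
  exact (ode_sol Ap Am t0 b HAp HAm Ht0 Hb0 Hd).
Qed.
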